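(* Let $\delta=x^{\mathbf d}f(\theta)$ be a homogeneous differential operator on $R$ of degree $\mathbf d\neq\mathbf 0$ with $-\mathbf d\in S$ but $-\mathbf d$ not in the interior of $\sigma^\vee$. If $\delta$ fixes at least one nonzero monomial ideal of $R$, then $\delta$ fixes infinitely many distinct nonzero monomial ideals of $R$.
   Context: Let $\sigma\subseteq\mathbb R^d$ be a full-dimensional, strongly convex rational polyhedral cone, $S=\sigma^\vee\cap\mathbb Z^d$, $R=\mathbb C[S]$ with monomial basis $x^{\mathbf a}$, $\mathbf a\in S$. Let $h_1,\dots,h_n$ be the primitive support functions of the facets of $\sigma^\vee$ (so $S=\{\mathbf a\in\mathbb Z^d: h_i(\mathbf a)\ge 0\ \forall i\}$). $(g,m)!=\prod_{j=0}^m(g-j)$ for $m\ge0$, $=1$ for $m<0$; $H_{\mathbf d}=\prod_i(h_i,h_i(-\mathbf d)-1)!$. For $f\in\mathbb C[t_1,\dots,t_d]$ divisible by $H_{\mathbf d}$, $\delta=x^{\mathbf d}f(\theta)$ is the $\mathbb C$-linear map $R\to R$ with $\delta(x^{\mathbf a})=f(\mathbf a)x^{\mathbf a+\mathbf d}$. An ideal $I$ is $\delta$-fixed if $\delta(I)=I$. *)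

(* Defs.v *)
From mathcomp Require Import all_boot all_algebra.
From mathcomp Require Import Rstruct.
From mathcomp Require Import complex.
From mathcomp Require Import mpoly.

Set Implicit Arguments.
Unset Strict Implicit.
Unset Printing Implicit Defensive.

Import GRing.Theory Num.Theory.
Local Open Scope ring_scope.

Notation CC := (complex.complex Rdefinitions.R).

Notation Zd d := ('rV[int]_d).

Definition ev (d : nat) (h a : Zd d) : int := \sum_(j < d) h 0 j * a 0 j.

(* ---- The cone sigma^vee, given by the primitive facet support functions
   h_0, ..., h_(n-1).  sigma is full-dimensional and strongly convex,
   i.e. sigma^vee is strongly convex and full-dimensional. *)
Definition cone_data (d n : nat) (h : 'I_n -> Zd d) : Prop :=
  (exists a : Zd d, forall i, 0 < ev (h i) a) /\
  (forall a : Zd d, (forall i, ev (h i) a = 0) -> a = 0) /\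
  (forall i, \big[gcdz/0]_(j < d) h i 0 j = 1) /\
  (* each h_i defines a facet: the inequality h_i >= 0 is irredundant *)
  (forall i, exists a : Zd d,
      ev (h i) a < 0 /\ forall j, j != i -> 0 <= ev (h j) a).

Definition inS (d n : nat) (h : 'I_n -> Zd d) (a : Zd d) : Prop :=
  forall i, 0 <= ev (h i) a.

Definition in_interior (d n : nat) (h : 'I_n -> Zd d) (a : Zd d) : Prop :=
  forall i, 0 < ev (h i) a.

(* ---- The semigroup ring R = C[S].  An element is a finitely supported
   coefficient function S -> C (extended by 0 to Z^d); the monomial x^a is
   the indicator of a. *)
Definition fin_supp (d : nat) (g : Zd d -> CC) : Prop :=
  exists s : seq (Zd d), forall a, g a != 0 -> a \in s.

Definition inR (d n : nat) (h : 'I_n -> Zd d) (g : Zd d -> CC) : Prop :=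
  fin_supp g /\ forall a, g a != 0 -> inS h a.

Definition mono (d : nat) (a : Zd d) : Zd d -> CC :=
  fun c => if c == a then 1 else 0.

(* Product r * g in C[S], computed through any duplicate-free list s
   containing the support of r (the result does not depend on s). *)
Definition mulR (d : nat) (s : seq (Zd d)) (r g : Zd d -> CC) : Zd d -> CC :=
  fun c => \sum_(a <- s) r a * g (c - a).

Definition is_ideal (d n : nat) (h : 'I_n -> Zd d) (I : (Zd d -> CC) -> Prop)
  : Prop :=
  (forall g, I g -> inR h g) /\
  I (fun _ => 0) /\
  (forall g1 g2, I g1 -> I g2 -> I (fun c => g1 c + g2 c)) /\
  (forall r g (s : seq (Zd d)), inR h r -> uniq s ->
      (forall a, r a != 0 -> a \in s) -> I g -> I (mulR s r g)).

Definition ideal_gen (d n : nat) (h : 'I_n -> Zd d) (G : (Zd d -> CC) -> Prop)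
  (g : Zd d -> CC) : Prop :=
  forall J, is_ideal h J -> (forall x, G x -> J x) -> J g.

Definition monomial_ideal (d n : nat) (h : 'I_n -> Zd d)
  (I : (Zd d -> CC) -> Prop) : Prop :=
  is_ideal h I /\
  exists E : Zd d -> Prop, (forall a, E a -> inS h a) /\
    forall g, I g <-> ideal_gen h (fun x => exists2 a, E a & x = mono a) g.

Definition nonzero_ideal (d : nat) (I : (Zd d -> CC) -> Prop) : Prop :=
  exists g, I g /\ g <> (fun _ => 0).

Definition linpoly (d : nat) (h : Zd d) : {mpoly CC[d]} :=
  \sum_(j < d) (h 0 j)%:~R *: 'X_j.

Definition ffact (d : nat) (g : {mpoly CC[d]}) (m : int) : {mpoly CC[d]} :=
  if (0 <= m) then \prod_(j < `|m|%N.+1) (g - j%:R) else 1.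

Definition Hpoly (d n : nat) (h : 'I_n -> Zd d) (dd : Zd d) : {mpoly CC[d]} :=
  \prod_(i < n) ffact (linpoly (h i)) (ev (h i) (- dd) - 1).

Definition evalZ (d : nat) (f : {mpoly CC[d]}) (a : Zd d) : CC :=
  f.@[fun j => (a 0 j)%:~R].

(* delta = x^dd f(theta):  delta(x^a) = f(a) x^(a + dd), extended linearly *)
Definition delta (d : nat) (dd : Zd d) (f : {mpoly CC[d]}) (g : Zd d -> CC)
  : Zd d -> CC :=
  fun c => evalZ f (c - dd) * g (c - dd).

Definition delta_fixed (d : nat) (dd : Zd d) (f : {mpoly CC[d]})
  (I : (Zd d -> CC) -> Prop) : Prop :=
  forall g, I g <-> exists2 g', I g' & g = delta dd f g'.

Definition mdivides (d : nat) (p f : {mpoly CC[d]}) : Prop :=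
  exists q : {mpoly CC[d]}, f = q * p.

(* Main.v *)
Require Import Defs.
From mathcomp Require Import all_boot all_algebra.
From mathcomp Require Import Rstruct complex mpoly.
From Stdlib Require Import FunctionalExtensionality Classical.
Import GRing.Theory Num.Theory.
Import order.Order.TTheory.
Local Open Scope ring_scope.
Set Implicit Arguments.
Unset Strict Implicit.

Lemma evD d (h a b : Zd d) : ev h (a + b) = ev h a + ev h b.
Proof. by rewrite /ev -big_split /=; apply: eq_bigr => j _; rewrite mxE mulrDr. Qed.

Lemma evN d (h a : Zd d) : ev h (- a) = - ev h a.
Proof. by rewrite /ev -sumrN; apply: eq_bigr => j _; rewrite mxE mulrN. Qed.

Lemma ev0 d (h : Zd d) : ev h 0 = 0.
Proof. by rewrite /ev big1 // => j _; rewrite mxE mulr0. Qed.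

Lemma evMn d (h a : Zd d) k : ev h (a *+ k) = ev h a *+ k.
Proof. by elim: k => [|k IH]; rewrite ?mulr0n ?ev0 // !mulrS evD IH. Qed.

Lemma inS0 d n (h : 'I_n -> Zd d) : inS h 0.
Proof. by move=> i; rewrite ev0. Qed.

Lemma inSD d n (h : 'I_n -> Zd d) a b : inS h a -> inS h b -> inS h (a + b).
Proof. by move=> Ha Hb i; rewrite evD addr_ge0. Qed.

Lemma inSMn d n (h : 'I_n -> Zd d) a k : inS h a -> inS h (a *+ k).
Proof. by move=> Ha i; rewrite evMn mulrn_wge0. Qed.

Lemma sum_nz (T : eqType) (s : seq T) (F : T -> CC) :
  \sum_(a <- s) F a != 0 -> exists2 a, a \in s & F a != 0.
Proof.
case: (boolP (has (fun a => F a != 0) s)) => [/hasP[a ins nz] _|/hasPn H].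
  by exists a.
by rewrite big1_seq ?eqxx // => a /andP[_ /H]; rewrite negbK => /eqP.
Qed.

Lemma mono_nz d (a c : Zd d) : mono a c != 0 -> c = a.
Proof. by rewrite /mono; case: (c =P a) => // _; rewrite eqxx. Qed.

Lemma mono_self d (a : Zd d) : mono a a = 1.
Proof. by rewrite /mono eqxx. Qed.

Lemma inR_mono d n (h : 'I_n -> Zd d) a : inS h a -> inR h (mono a).
Proof.
move=> Ha; split; first by exists [:: a] => c /mono_nz ->; rewrite mem_seq1.
by move=> c /mono_nz ->.
Qed.

Lemma inR0 d n (h : 'I_n -> Zd d) : inR h (fun _ => 0).
Proof. by split; [exists [::] => c; rewrite eqxx | move=> c; rewrite eqxx]. Qed.

Lemma inR_add d n (h : 'I_n -> Zd d) g1 g2 :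
  inR h g1 -> inR h g2 -> inR h (fun c => g1 c + g2 c).
Proof.
move=> [[s1 H1] S1] [[s2 H2] S2]; split.
  exists (s1 ++ s2) => c nz; rewrite mem_cat.
  case: (boolP (g1 c != 0)) => [/H1 -> //|]; rewrite negbK => /eqP E.
  by rewrite E add0r in nz; rewrite (H2 _ nz) orbT.
move=> c nz; case: (boolP (g1 c != 0)) => [/S1 //|]; rewrite negbK => /eqP E.
by rewrite E add0r in nz; apply: S2.
Qed.

Lemma mulR_nz d (s : seq (Zd d)) r g c : mulR s r g c != 0 ->
  exists2 a, a \in s & r a != 0 /\ g (c - a) != 0.
Proof.
move=> /sum_nz [a ins nz]; exists a => //.
by move: nz; rewrite mulf_eq0 negb_or => /andP[].
Qed.

Lemma inR_mul d n (h : 'I_n -> Zd d) s r g :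
  inR h r -> inR h g -> inR h (mulR s r g).
Proof.
move=> [_ Sr] [[sg Hg] Sg]; split.
  exists [seq a + b | a <- s, b <- sg] => c /mulR_nz [a ins [ra gca]].
  have -> : c = a + (c - a) by rewrite addrC subrK.
  by apply/allpairsP; exists (a, c - a); rewrite /= ins Hg.
move=> c /mulR_nz [a ins [ra gca]].
have -> : c = a + (c - a) by rewrite addrC subrK.
by apply: inSD; [apply: Sr | apply: Sg].
Qed.

Definition JP d n (h : 'I_n -> Zd d) (P : Zd d -> Prop) (g : Zd d -> CC) :=
  inR h g /\ forall c, g c != 0 -> P c.
Definition upP d n (h : 'I_n -> Zd d) (P : Zd d -> Prop) :=
  (forall c, P c -> inS h c) /\ (forall c a, P c -> inS h a -> P (c + a)).

Lemma JP_ideal d n (h : 'I_n -> Zd d) P : upP h P -> is_ideal h (JP h P).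
Proof.
move=> [PS Pup]; split; first by move=> g [].
split; first by split; [apply: inR0 | move=> c; rewrite eqxx].
split.
  move=> g1 g2 [R1 P1] [R2 P2]; split; first exact: inR_add.
  move=> c nz; case: (boolP (g1 c != 0)) => [/P1 //|]; rewrite negbK => /eqP E.
  by rewrite E add0r in nz; apply: P2.
move=> r g s Rr _ _ [Rg Pg]; split; first exact: inR_mul.
move=> c /mulR_nz [a _ [ra gca]].
have -> : c = (c - a) + a by rewrite subrK.
by apply: Pup; [apply: Pg | apply: Rr.2].
Qed.

Lemma mono_mul d (a b : Zd d) : mulR [:: a] (mono a) (mono b) = mono (a + b).
Proof.
apply: functional_extensionality => c; rewrite /mulR big_seq1 mono_self mul1r.
rewrite /mono; congr (if _ then _ else _).
apply/eqP/eqP => [<-|->]; [by rewrite addrC subrK | by rewrite [a + b]addrC addrK].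
Qed.

Lemma scale_in d n (h : 'I_n -> Zd d) J x k : is_ideal h J ->
  (k != 0 -> J (mono x)) -> J (fun c => k * mono x c).
Proof.
move=> [_ [J0 [_ JM]]] Hx; case: (boolP (k == 0)) => [/eqP ->|nz].
  by have -> : (fun c => 0 * mono x c) = (fun _ => 0)
    by apply: functional_extensionality => c; rewrite mul0r.
have -> : (fun c => k * mono x c) = mulR [:: 0] (fun a => k * mono 0 a) (mono x).
  apply: functional_extensionality => c.
  by rewrite /mulR big_seq1 mono_self mulr1 subr0.
have Hr : inR h (fun a => k * mono 0 a).
  split; first by exists [:: 0] => a; rewrite mulf_eq0 negb_or => /andP[_ /mono_nz ->]; rewrite mem_seq1.
  by move=> a; rewrite mulf_eq0 negb_or => /andP[_ /mono_nz ->]; apply: inS0.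
apply: (JM _ _ _ Hr) => //; last exact: Hx.
by move=> a; rewrite mulf_eq0 negb_or => /andP[_ /mono_nz ->]; rewrite mem_seq1.
Qed.

Lemma decomp d n (h : 'I_n -> Zd d) J g : is_ideal h J -> inR h g ->
  (forall c, g c != 0 -> J (mono c)) -> J g.
Proof.
move=> HJ [[s Hs] _] Hm.
have Hgs : forall s' : seq (Zd d), J (fun c => if c \in s' then g c else 0).
  elim=> [|x s' IH].
    have -> : (fun c => if c \in [::] then g c else 0) = (fun _ => 0)
      by apply: functional_extensionality => c; rewrite in_nil.
    exact: HJ.2.1.
  case: (boolP (x \in s')) => xs.
    have -> : (fun c => if c \in x :: s' then g c else 0) =
              (fun c => if c \in s' then g c else 0) => //.
    apply: functional_extensionality => c; rewrite in_cons.
    by case: (c =P x) => [->|]; rewrite ?xs.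
  have -> : (fun c => if c \in x :: s' then g c else 0) =
     (fun c => (fun c => g x * mono x c) c + (fun c => if c \in s' then g c else 0) c).
    apply: functional_extensionality => c; rewrite in_cons /mono.
    case: (c =P x) => [->|_] /=; first by rewrite (negbTE xs) mulr1 addr0.
    by rewrite mulr0 add0r.
  apply: HJ.2.2.1 => //; apply: (scale_in HJ) => nz; exact: Hm.
have -> : g = (fun c => if c \in s then g c else 0) => //.
apply: functional_extensionality => c; case: (boolP (c \in s)) => // cs.
by apply/eqP; apply: contraR cs => /Hs.
Qed.

Lemma JP_monomial d n (h : 'I_n -> Zd d) P : upP h P -> monomial_ideal h (JP h P).
Proof.
move=> HP; split; first exact: JP_ideal.
exists P; split; first exact: HP.1.
move=> g; split.
  move=> [Rg Pg] J HJ HG; apply: (decomp HJ Rg) => c /Pg Pc.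
  by apply: HG; exists c.
move=> Hg; apply: Hg; first exact: JP_ideal.
move=> x [a Pa ->]; split; first by apply: inR_mono; apply: HP.1.
by move=> c /mono_nz ->.
Qed.

Lemma monomial_mono d n (h : 'I_n -> Zd d) I : monomial_ideal h I ->
  forall g, I g -> forall c, g c != 0 -> I (mono c).
Proof.
move=> [HI [E [ES HE]]].
have IE : forall e, E e -> I (mono e) by move=> e Ee; apply/HE => J _ HG; apply: HG; exists e.
pose Q := fun g => inR h g /\ forall c, g c != 0 -> I (mono c).
have HQ : is_ideal h Q.
  split; first by move=> g [].
  split; first by split; [apply: inR0 | move=> c; rewrite eqxx].
  split.
    move=> g1 g2 [R1 P1] [R2 P2]; split; first exact: inR_add.
    move=> c nz; case: (boolP (g1 c != 0)) => [/P1 //|]; rewrite negbK => /eqP E0.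
    by rewrite E0 add0r in nz; apply: P2.
  move=> r g s Rr _ _ [Rg Pg]; split; first exact: inR_mul.
  move=> c /mulR_nz [a _ [ra gca]].
  have -> : c = a + (c - a) by rewrite addrC subrK.
  rewrite -mono_mul; apply: HI.2.2.2 => //.
  - by apply: inR_mono; apply: Rr.2.
  - by move=> b /mono_nz ->; rewrite mem_seq1.
  - exact: Pg.
move=> g /HE Hg; have := Hg Q HQ; case => //.
move=> x [e Ee ->]; split; first by apply: inR_mono; apply: ES.
by move=> c /mono_nz ->; apply: IE.
Qed.

Lemma monomial_char d n (h : 'I_n -> Zd d) I : monomial_ideal h I ->
  forall g, I g <-> JP h (fun c => I (mono c)) g.
Proof.
move=> HI g; split.
  move=> Ig; split; first exact: HI.1.1 Ig.
  exact: (monomial_mono HI Ig).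
by move=> [Rg Pg]; apply: (decomp HI.1 Rg).
Qed.

Lemma PI_up d n (h : 'I_n -> Zd d) I : monomial_ideal h I ->
  upP h (fun c => I (mono c)).
Proof.
move=> HI; split.
  by move=> c /HI.1.1 [_]; apply; rewrite mono_self oner_neq0.
move=> c a Ic Sa; rewrite addrC -mono_mul; apply: HI.1.2.2.2 => //.
- exact: inR_mono.
- by move=> b /mono_nz ->; rewrite mem_seq1.
Qed.

Lemma JP_fixed d n (h : 'I_n -> Zd d) dd f P : upP h P -> inS h (- dd) ->
  (forall c, P c -> evalZ f (c - dd) != 0) ->
  (forall c, P c -> evalZ f c != 0 -> P (c + dd)) ->
  delta_fixed dd f (JP h P).
Proof.
move=> [PS Pup] Sd HA HB g; split.
  move=> [[[s Hs] _] Pg].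
  exists (fun c => g (c + dd) / evalZ f c).
    have P' : forall c, g (c + dd) / evalZ f c != 0 -> P c.
      move=> c; rewrite mulf_eq0 negb_or => /andP[/Pg Pc _].
      by have := Pup _ _ Pc Sd; rewrite addrK.
    split=> //; split; last by move=> c /P'/PS.
    exists [seq x - dd | x <- s] => c nz; apply/mapP; exists (c + dd); last by rewrite addrK.
    by apply: Hs; move: nz; rewrite mulf_eq0 negb_or => /andP[].
  apply: functional_extensionality => c; rewrite /delta subrK.
  case: (boolP (g c == 0)) => [/eqP ->|nz]; first by rewrite mul0r mulr0.
  by rewrite mulrCA divff ?mulr1 //; apply: HA; apply: Pg.
move=> [g' [[[s Hs] _] Pg] ->].
have P' : forall c, delta dd f g' c != 0 -> P c.
  move=> c; rewrite /delta mulf_eq0 negb_or => /andP[fz /Pg Pc].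
  by have := HB _ Pc fz; rewrite subrK.
split=> //; split; last by move=> c /P'/PS.
exists [seq x + dd | x <- s] => c nz; apply/mapP; exists (c - dd); last by rewrite subrK.
by apply: Hs; move: nz; rewrite /delta mulf_eq0 negb_or => /andP[].
Qed.

Lemma fixA d (dd : Zd d) f I : delta_fixed dd f I ->
  forall c, I (mono c) -> evalZ f (c - dd) != 0.
Proof.
move=> HF c /HF [g' _ E]; have := congr1 (fun F => F c) E.
rewrite /delta mono_self => E1; apply/eqP => E0; move: E1; rewrite E0 mul0r.
by move/eqP; rewrite oner_eq0.
Qed.

Lemma fixB d n (h : 'I_n -> Zd d) dd f I : monomial_ideal h I -> delta_fixed dd f I ->
  forall c, I (mono c) -> evalZ f c != 0 -> I (mono (c + dd)).
Proof.
move=> HI HF c Ic fz.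
have Id : I (delta dd f (mono c)) by apply/HF; exists (mono c).
apply: (monomial_mono HI Id).
by rewrite /delta addrK mono_self mulr1.
Qed.

Lemma Mn_lt (x : int) k l : 0 < x -> (k < l)%N -> x *+ k < x *+ l.
Proof.
move=> x0 kl; rewrite -(subnKC (ltnW kl)) mulrnDr ltrDl pmulrn_lgt0 //.
by rewrite subn_gt0.
Qed.

Theorem mainTheorem13 (d n : nat) (h : 'I_n -> 'rV[int]_d)
  (hcone : cone_data h)
  (dd : 'rV[int]_d) (f : {mpoly CC[d]})
  (hf : mdivides (Hpoly h dd) f)
  (hdd0 : dd != 0)
  (hdS : inS h (- dd))
  (hdint : ~ in_interior h (- dd))
  (hfix : exists I, monomial_ideal h I /\ nonzero_ideal I /\ delta_fixed dd f I) :
  exists Is : nat -> ('rV[int]_d -> CC) -> Prop,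
    (forall k, monomial_ideal h (Is k) /\ nonzero_ideal (Is k) /\
               delta_fixed dd f (Is k)) /\
    (forall k l, k <> l -> exists g, ~ (Is k g <-> Is l g)).
Proof.
case: hfix => I [HI [[g [Ig gnz]] HF]].
have [c0 gc0] : exists c, g c != 0.
  case: (classic (exists c, g c != 0)) => // Hn; exfalso; apply: gnz.
  apply: functional_extensionality => c; case: (boolP (g c == 0)) => [/eqP //|nz].
  by exfalso; apply: Hn; exists c.
have Ic0 : I (mono c0) := monomial_mono HI Ig gc0.
have [i Hi] : exists i, ~~ (0 < ev (h i) (- dd)).
  case: (classic (exists i, ~~ (0 < ev (h i) (- dd)))) => // Hn; exfalso.
  apply: hdint => i; case: (boolP (0 < ev (h i) (- dd))) => // H.
  by exfalso; apply: Hn; exists i.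
have evd : ev (h i) dd = 0.
  have := hdS i; rewrite le_eqVlt (negbTE Hi) orbF evN eq_sym oppr_eq0.
  by move/eqP.
case: hcone => [[a0 Ha0] _].
have PIu := PI_up HI.
pose b k := c0 + a0 *+ k.
have Ib : forall k, I (mono (b k)).
  by move=> k; apply: PIu.2 => //; apply: inSMn => j; apply: ltW.
pose m k := ev (h i) (b k).
have mlt : forall k l, (k < l)%N -> m k < m l.
  by move=> k l kl; rewrite /m /b !evD !evMn ltrD2l Mn_lt.
pose P k c := I (mono c) /\ m k <= ev (h i) c.
have HP : forall k, upP h (P k).
  move=> k; split; first by move=> c [/PIu.1].
  move=> c a [Ic mc] Sa; split; first exact: PIu.2.
  by rewrite evD (le_trans mc) // lerDl; apply: Sa.
have Jb : forall k, JP h (P k) (mono (b k)).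
  move=> k; split; first by apply: inR_mono; apply: PIu.1.
  by move=> c /mono_nz ->; split.
exists (fun k => JP h (P k)); split.
  move=> k; split; first exact: JP_monomial.
  split.
    exists (mono (b k)); split => // E.
    by have := congr1 (fun F => F (b k)) E; rewrite /= mono_self => /eqP; rewrite oner_eq0.
  apply: JP_fixed => //.
    by move=> c [Ic _]; apply: (fixA HF).
  move=> c [Ic mc] fz; split; first exact: (fixB HI HF).
  by rewrite evD evd addr0.
have key : forall k l, (k < l)%N -> ~ JP h (P l) (mono (b k)).
  move=> k l kl [_ H]; have := H (b k); rewrite mono_self oner_neq0 => /(_ isT) [_].
  by rewrite leNgt mlt.
move=> k l kl; case: (ltngtP k l) => [lt|gt|eq]; last by [].
  exists (mono (b k)) => E.
  by apply: (key _ _ lt); apply: (proj1 E); apply: Jb.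
exists (mono (b l)) => E.
by apply: (key _ _ gt); apply: (proj2 E); apply: Jb.
Qed.
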